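(* Let $P$ and $Q$ be graded posets of ranks $m+1$ and $n+1$ respectively. Then $$\Theta(\Psi(P\diamond^* Q))=\begin{bmatrix} m+n\\ n\end{bmatrix}_q\cdot\Theta(\Psi(P))\cdot\Theta(\Psi(Q)).$$
   Context: All posets are graded with minimum $\hat0$, maximum $\hat1$ and rank function $\rho$. The dual diamond product is $P\diamond^*Q=\big((P-\{\hat1_P\})\times(Q-\{\hat1_Q\})\big)\cup\{\hat1\}$, where the first part carries the componentwise (Cartesian product) order and $\hat1$ is a new maximum; it has rank $m+n+1$. For such a poset $P$ of rank $r+1$, its $\mathbf{a}\mathbf{b}$-index is $\Psi(P)=\sum_{S\subseteq\{1,\dots,r\}} f_S\, v_S$, where for $S=\{s_1<\cdots<s_k\}$, $f_S$ is the number of chains $\hat0<x_1<\cdots<x_k<\hat1$ with $\rho(x_i)=s_i$, and $v_S=v_1\cdots v_r$ with $v_i=\mathbf{b}$ if $i\in S$, $v_i=\mathbf{a}-\mathbf{b}$ otherwise ($\mathbf{a},\mathbf{b}$ non-commuting variables). The Major MacMahon map $\Theta:\mathbb{Z}\langle\mathbf{a},\mathbf{b}\rangle\to\mathbb{Z}[q]$ is linear with $\Theta(u_1\cdots u_r)=\prod_{i:\,u_i=\mathbf{b}}q^i$ on monomials. $[k]=1+\cdots+q^{k-1}$, $[k]!=[k]\cdots[1]$, $[0]!=1$, $\begin{bmatrix} m+n\\ n\end{bmatrix}_q=\frac{[m+n]!}{[m]!\,[n]!}$. *)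

(* Defs.v *)
From mathcomp Require Import all_boot all_algebra.
Set Implicit Arguments. Unset Strict Implicit. Unset Printing Implicit Defensive.
Import GRing.Theory.
Local Open Scope ring_scope.

Definition ltb (T : finType) (le : rel T) (x y : T) : bool := (x != y) && le x y.

Definition is_graded_poset (T : finType) (le : rel T) (bot top : T) (rk : T -> nat)
  : Prop :=
  (forall x, le x x) /\
  (forall x y, le x y -> le y x -> x = y) /\
  (forall x y z, le x y -> le y z -> le x z) /\
  (forall x, le bot x /\ le x top) /\
  rk bot = 0%N /\
  (forall x y, ltb le x y -> (forall z, ~~ (ltb le x z && ltb le z y)) ->
                   rk y = (rk x).+1).

(* For a poset of rank r+1: index i : 'I_r stands for the rank i+1.
   Chains bot < x_1 < ... < x_k < top with rank set S are encoded as
   functions c : 'I_r -> option T with c i = Some x_j exactly at i \in S. *)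
Definition chains (T : finType) (le : rel T) (bot top : T) (rk : T -> nat)
  (r : nat) (S : {set 'I_r}) : {set {ffun 'I_r -> option T}} :=
  [set c : {ffun 'I_r -> option T} |
    [forall i : 'I_r, if i \in S then
        (if c i is Some x then [&& rk x == i.+1, ltb le bot x & ltb le x top]
         else false)
      else c i == None]
    && [forall i : 'I_r, forall j : 'I_r, (i < j)%N ==>
        (match c i, c j with Some x, Some y => ltb le x y | _, _ => true end)]].

Definition fS (T : finType) (le : rel T) (bot top : T) (rk : T -> nat)
  (r : nat) (S : {set 'I_r}) : nat := #|chains le bot top rk S|.

(* Homogeneous degree-r elements of Z<a,b> are represented by their coefficient
   functions on words w : 'I_r -> bool (w i = true means letter b, false means a;
   position i : 'I_r is position i+1). *)
(* coefficient of the word w in v_S = v_1 ... v_r, v_i = b if i in S, a - b else *)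
Definition vcoef (r : nat) (S : {set 'I_r}) (w : {ffun 'I_r -> bool}) : int :=
  \prod_(i < r) (if i \in S then (if w i then 1 else 0)
                 else (if w i then -1 else 1)).

Definition abIndex (T : finType) (le : rel T) (bot top : T) (rk : T -> nat)
  (r : nat) : {ffun {ffun 'I_r -> bool} -> int} :=
  [ffun w => \sum_(S : {set 'I_r}) (fS le bot top rk S)%:R * vcoef S w].

Definition Theta (r : nat) (u : {ffun {ffun 'I_r -> bool} -> int}) : {poly int} :=
  \sum_(w : {ffun 'I_r -> bool}) u w *: 'X^(\sum_(i < r | w i) i.+1).

Definition qint (k : nat) : {poly int} := \sum_(i < k) 'X^i.
Definition qfact (k : nat) : {poly int} := \prod_(i < k) qint i.+1.
(* the divisor is monic, so %/ is exact polynomial division *)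
Definition qbinom (m n : nat) : {poly int} := qfact (m + n) %/ (qfact m * qfact n).

Unset Implicit Arguments.
(* Dual diamond product: ((P - top_P) x (Q - top_Q)) u {new top} *)
Definition ddcar {P Q : finType} (topP : P) (topQ : Q) : finType :=
  option ({x : P | x != topP} * {y : Q | y != topQ}).

Definition dd_le {P Q : finType} (leP : rel P) (leQ : rel Q) (topP : P) (topQ : Q)
  : rel (ddcar topP topQ) :=
  fun u v => match u, v with
  | _, None => true
  | None, Some _ => false
  | Some (a, b), Some (c, d) => leP (val a) (val c) && leQ (val b) (val d)
  end.

Definition dd_top {P Q : finType} (topP : P) (topQ : Q) : ddcar topP topQ := None.

(* the minimum (botP, botQ); the fallback None is never used when botP != topP,
   botQ != topQ *)
Definition dd_bot {P Q : finType} (botP topP : P) (botQ topQ : Q)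
  : ddcar topP topQ :=
  match @insub _ (fun x => x != topP) _ botP,
        @insub _ (fun y => y != topQ) _ botQ with
  | Some a, Some b => Some (a, b)
  | _, _ => None
  end.

Definition dd_rk {P Q : finType} (topP : P) (topQ : Q) (rkP : P -> nat)
  (rkQ : Q -> nat) (u : ddcar topP topQ) : nat :=
  match u with
  | None => ((rkP topP).-1 + (rkQ topQ).-1).+1
  | Some (a, b) => (rkP (val a) + rkQ (val b))%N
  end.

(* Main.v *)
Require Import Defs.
From mathcomp Require Import all_boot all_algebra.
From mathcomp Require Import ring.
Import GRing.Theory.
Local Open Scope ring_scope.
Set Implicit Arguments. Unset Strict Implicit. Unset Printing Implicit Defensive.
Record GH (T : finType) (le : rel T) (bot top : T) (rk : T -> nat) (r : nat) : Prop := {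
  gh_refl : forall x, le x x;
  gh_anti : forall x y, le x y -> le y x -> x = y;
  gh_trans : forall x y z, le x y -> le y z -> le x z;
  gh_mono : forall x y, ltb le x y -> (rk x < rk y)%N;
  gh_bot : forall x, le bot x;
  gh_top : forall x, le x top;
  gh_rb : rk bot = 0%N;
  gh_rt : rk top = r.+1 }.

Section Gen.
Variables (T : finType) (le : rel T) (bot top : T) (rk : T -> nat) (r : nat).
Hypothesis HG : GH le bot top rk r.
Let Hanti : forall x y, le x y -> le y x -> x = y := gh_anti HG.
Let Htrans : forall x y z, le x y -> le y z -> le x z := gh_trans HG.
Let Hmono : forall x y, ltb le x y -> (rk x < rk y)%N := gh_mono HG.
Let Hbot : forall x, le bot x := gh_bot HG.
Let Htop : forall x, le x top := gh_top HG.
Let Hrb : rk bot = 0%N := gh_rb HG.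
Let Hrt : rk top = r.+1 := gh_rt HG.
Let Hrefl : forall x, le x x := gh_refl HG.

Local Notation lt := (ltb le).

Lemma glt_trans x y z : lt x y -> lt y z -> lt x z.
Proof.
move=> /andP[nxy lxy] /andP[nyz lyz]; apply/andP; split; last exact: Htrans lxy lyz.
apply/eqP=> exz; subst z.
by move: nxy; rewrite (Hanti lxy lyz) eqxx.
Qed.

Lemma glt_le x y : lt x y -> le x y.
Proof. by case/andP. Qed.

Definition chainb (x : T) (c : {ffun 'I_r -> option T}) : bool :=
  [forall i, if c i is Some y then [&& rk y == i.+1, lt bot y & lt y x] else true] &&
  [forall i : 'I_r, forall j : 'I_r, (i < j)%N ==>
     match c i, c j with Some a, Some b => lt a b | _, _ => true end].

Lemma chainb_elt x (c : {ffun 'I_r -> option T}) (i : 'I_r) a : chainb x c -> c i = Some a ->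
  [/\ rk a = i.+1, lt bot a & lt a x].
Proof.
case/andP=> /forallP/(_ i) + _ => + E; rewrite E => /and3P[/eqP ? ? ?]; by split.
Qed.

Lemma chainb_ord x (c : {ffun 'I_r -> option T}) (i j : 'I_r) a b : chainb x c -> (i < j)%N -> c i = Some a -> c j = Some b ->
  lt a b.
Proof.
case/andP=> _ /forallP/(_ i)/forallP/(_ j)/implyP H ij Ei Ej.
by have := H ij; rewrite Ei Ej.
Qed.

Lemma chainbP x (c : {ffun 'I_r -> option T}) :
  (forall (i : 'I_r) a, c i = Some a -> [/\ rk a = i.+1, lt bot a & lt a x]) ->
  (forall (i j : 'I_r) a b, (i < j)%N -> c i = Some a -> c j = Some b -> lt a b) ->
  chainb x c.
Proof.
move=> H1 H2; apply/andP; split.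
  apply/forallP=> i; case E: (c i) => [a|] //.
  by case: (H1 _ _ E) => -> -> ->; rewrite eqxx.
apply/forallP=> i; apply/forallP=> j; apply/implyP=> ij.
case Ei: (c i) => [a|] //; case Ej: (c j) => [b|] //; exact: H2 ij Ei Ej.
Qed.

Variable (R : comNzRingType) (t : nat -> R).

Definition wt (c : {ffun 'I_r -> option T}) : R :=
  \prod_(i < r) (if c i is Some _ then t i.+1 else 1).

Definition Bs (x : T) : R := \sum_(c | chainb x c) wt c.

Definition topslot (s : 'I_r) (c : {ffun 'I_r -> option T}) : bool :=
  (c s != None) && [forall i : 'I_r, (s < i)%N ==> (c i == None)].

Definition remc (s : 'I_r) (c : {ffun 'I_r -> option T}) : {ffun 'I_r -> option T} :=
  [ffun i => if i == s then None else c i].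
Definition insc (s : 'I_r) (y : T) (c : {ffun 'I_r -> option T}) : {ffun 'I_r -> option T} :=
  [ffun i => if i == s then Some y else c i].

Lemma chain_none_s y (c : {ffun 'I_r -> option T}) (s : 'I_r) : chainb y c -> rk y = s.+1 -> c s = None.
Proof.
move=> hc hy; case E: (c s) => [a|] //.
case: (chainb_elt hc E) => ha _ /Hmono; by rewrite ha hy ltnn.
Qed.

Lemma rem_chain x (c : {ffun 'I_r -> option T}) (s : 'I_r) y : chainb x c -> topslot s c -> c s = Some y -> chainb y (remc s c).
Proof.
move=> hc /andP[_ /forallP hts] hs; apply: chainbP.
- move=> i a; rewrite ffunE; case: eqP => // nis E.
  case: (chainb_elt hc E) => -> -> _; split => //.
  have: (i < s)%N.
    rewrite ltn_neqAle; apply/andP; split; first by apply/eqP => /val_inj.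
    rewrite leqNgt; apply/negP => /(implyP (hts i)); by rewrite E.
  move=> lis; exact: chainb_ord hc lis E hs.
- move=> i j a b ij; rewrite !ffunE; case: eqP => // _ Ei; case: eqP => // _ Ej.
  exact: chainb_ord hc ij Ei Ej.
Qed.

Lemma ins_chain x (c : {ffun 'I_r -> option T}) (s : 'I_r) y : chainb y c -> lt bot y -> lt y x -> rk y = s.+1 ->
  chainb x (insc s y c) && topslot s (insc s y c).
Proof.
move=> hc hby hyx hy; apply/andP; split.
  apply: chainbP.
  - move=> i a; rewrite ffunE; case: eqP => [-> [<-]|_ E]; first by split.
    by case: (chainb_elt hc E) => -> -> hay; split => //; exact: glt_trans hay hyx.
  - move=> i j a b ij; rewrite !ffunE.
    case: eqP => [eis [<-]|nis].
      case: eqP => [ejs|_ Ej]; first by subst; rewrite ltnn in ij.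
      case: (chainb_elt hc Ej) => hb _ /Hmono; rewrite hb hy -eis ltnS => H.
      by have := ltn_trans ij H; rewrite ltnn.
    move=> Ei; case: eqP => [ejs [<-]|_ Ej]; first by case: (chainb_elt hc Ei).
    exact: chainb_ord hc ij Ei Ej.
apply/andP; split; first by rewrite ffunE eqxx.
apply/forallP=> i; apply/implyP=> si; rewrite ffunE.
have -> : (i == s) = false by apply/negbTE; apply/eqP=> eis; subst; rewrite ltnn in si.
case E: (c i) => [a|] //.
case: (chainb_elt hc E) => ha _ /Hmono; rewrite ha hy ltnS => H.
by have := ltn_trans si H; rewrite ltnn.
Qed.

Lemma wt_ins (c : {ffun 'I_r -> option T}) (s : 'I_r) y : c s = None -> wt (insc s y c) = t s.+1 * wt c.
Proof.
move=> hs; rewrite /wt [LHS](bigD1 s) // [in RHS](bigD1 s) // /= ffunE eqxx hs mul1r; congr (_ * _).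
by apply: eq_bigr => i nis; rewrite ffunE (negbTE nis).
Qed.

Lemma sum_top_y x (s : 'I_r) y : lt bot y -> lt y x -> rk y = s.+1 ->
  \sum_(c | chainb x c && topslot s c && (odflt bot (c s) == y)) wt c = t s.+1 * Bs y.
Proof.
move=> hby hyx hy.
rewrite /Bs big_distrr /=.
rewrite (reindex_onto (insc s y) (remc s)); last first.
  move=> c /andP[/andP[hc hts]]; case/andP: (hts) => + _.
  case E: (c s) => [a|] //= _ /eqP ea; subst a.
  apply/ffunP=> i; rewrite !ffunE; case: eqP => [->|] //; by rewrite E.
apply: eq_big => c.
  apply/idP/idP.
    move=> /andP[/andP[/andP[hc hts] _] /eqP hr].
    rewrite -hr; apply: (rem_chain hc hts); by rewrite ffunE eqxx.
  move=> hc; have hn := chain_none_s hc hy.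
  rewrite (ins_chain hc hby hyx hy) ffunE !eqxx /=; apply/eqP/ffunP => i.
  rewrite !ffunE; case: eqP => [->|] //.
move=> /andP[/andP[/andP[hc hts] _] /eqP hr].
have hn : c s = None by rewrite -hr ffunE eqxx.
by rewrite wt_ins.
Qed.


Definition emptyc : {ffun 'I_r -> option T} := [ffun => None].

Lemma topslot_ex (c : {ffun 'I_r -> option T}) : c != emptyc ->
  exists s, forall s', topslot s' c = (s' == s).
Proof.
move=> hne.
have [i0 hi0] : exists i0, c i0 != None.
  apply/existsP; apply: contraR hne => /existsPn H; apply/eqP/ffunP => i.
  by rewrite ffunE; apply/eqP; rewrite -[_ == _]negbK H.
case: (@arg_maxnP _ i0 (fun i => c i != None) (fun i : 'I_r => val i) hi0) => s hs hmax.
exists s => s'; apply/idP/idP.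
  case/andP=> hs' /forallP ha; apply/eqP/val_inj/eqP; rewrite eqn_leq.
  apply/andP; split; first exact: (hmax s' hs').
  rewrite leqNgt; apply/negP => /(implyP (ha s)); by rewrite (negbTE hs).
move/eqP->; rewrite /topslot hs /=; apply/forallP => i; apply/implyP => si.
apply/negPn/negP => hi; have /= := hmax i hi; by rewrite leqNgt si.
Qed.

Lemma topslot_empty s : topslot s emptyc = false.
Proof. by rewrite /topslot ffunE eqxx. Qed.

Lemma Bs_rec x : le x top ->
  Bs x = 1 + \sum_(y | lt bot y && lt y x) t (rk y) * Bs y.
Proof.
move=> hxt.
have he : chainb x emptyc.
  by apply: chainbP => [i a|i j a b _]; rewrite ffunE.
rewrite /Bs (bigD1 emptyc) //=.
have -> : wt emptyc = 1 by rewrite /wt big1 // => i _; rewrite ffunE.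
congr (_ + _).
transitivity (\sum_(s < r) \sum_(c | chainb x c && topslot s c) wt c).
  rewrite [RHS](exchange_big_dep (fun c => chainb x c && (c != emptyc))) /=; last first.
    move=> s c _ /andP[-> hts]; apply/eqP => ec; by rewrite ec topslot_empty in hts.
  apply: eq_bigr => c /andP[hc hne].
  have [s0 hs0] := topslot_ex hne.
  rewrite (eq_bigl (pred1 s0)); first by rewrite big_pred1_eq.
  by move=> s; rewrite /= hc hs0.
transitivity (\sum_(s < r) \sum_(y | (rk y == s.+1) && lt bot y && lt y x) t s.+1 * Bs y).
  apply: eq_bigr => s _.
  rewrite (partition_big (fun c : {ffun 'I_r -> option T} => odflt bot (c s)) (fun y => (rk y == s.+1) && lt bot y && lt y x)).
    apply: eq_bigr => y /andP[/andP[/eqP hy hby] hyx]; exact: sum_top_y.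
  move=> c /andP[hc /andP[hs _]]; case E: (c s) hs => [a|] //= _.
  by case: (chainb_elt hc E) => -> -> ->; rewrite eqxx.
rewrite (exchange_big_dep (fun y => lt bot y && lt y x)) /=; last first.
  by move=> s y _ /andP[/andP[_ ->] ->].
apply: eq_bigr => y /andP[hby hyx].
have hy1 : (0 < rk y)%N by have := Hmono hby; rewrite Hrb.
have hyt : lt y top.
  case/andP: hyx => nyx lyx; apply/andP; split; last exact: Htrans lyx hxt.
  apply/eqP => eyt; subst y.
  by move: nyx; rewrite (Hanti lyx hxt) eqxx.
have hyr : ((rk y).-1 < r)%N.
  have := Hmono hyt; rewrite Hrt ltnS; by case: (rk y) hy1.
rewrite (big_pred1 (Ordinal hyr)); first by rewrite /= prednK.
move=> s /=; rewrite hby hyx !andbT; apply/eqP/eqP => [hs|->].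
  by apply: val_inj; rewrite /= hs.
by rewrite /= prednK.
Qed.

Definition Zf y := if y == bot then 1 else t (rk y) * Bs y.

Lemma Bs_sumZ x : x != bot -> Bs x = \sum_(y | lt y x) Zf y.
Proof.
move=> hx; rewrite Bs_rec; last exact: Htop.
rewrite [RHS](bigD1 bot) /=; last by rewrite /ltb eq_sym hx Hbot.
rewrite /Zf eqxx; congr (_ + _); apply: eq_big => y.
  by rewrite {1}/ltb Hbot andbT eq_sym andbC.
by case/andP=> /andP[hby _] _; rewrite eq_sym (negbTE hby).
Qed.

Lemma SZ_nb x : x != bot -> \sum_(y | le y x) Zf y = (1 + t (rk x)) * Bs x.
Proof.
move=> hx; rewrite (bigD1 x) /=; last exact: Hrefl.
have -> : \sum_(y | le y x && (y != x)) Zf y = Bs x.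
  by rewrite (Bs_sumZ hx); apply: eq_bigl => y; rewrite /ltb andbC.
by rewrite {1}/Zf (negbTE hx) mulrDl mul1r addrC.
Qed.

Lemma SZ_b : \sum_(y | le y bot) Zf y = 1.
Proof.
rewrite (big_pred1 bot); first by rewrite /Zf eqxx.
move=> y /=; apply/idP/eqP => [h|->]; last exact: Hrefl.
exact: Hanti h (Hbot y).
Qed.

End Gen.

Section ThetaSec.
Variables (T : finType) (le : rel T) (bot top : T) (rk : T -> nat) (r : nat).

Definition supp (c : {ffun 'I_r -> option T}) : {set 'I_r} := [set i | c i != None].

Lemma chains_eq S c : (c \in chains le bot top rk S) = chainb le bot rk top c && (S == supp c).
Proof.
rewrite inE; apply/idP/idP.
  case/andP=> /forallP H1 H2; rewrite /chainb H2 andbT; apply/andP; split.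
    apply/forallP => i; have := H1 i; case: (i \in S); case: (c i) => //.
  apply/eqP/setP => i; rewrite inE; have := H1 i; case: (i \in S); case: (c i) => //.
case/andP=> /andP[/forallP H1 H2] /eqP ->; rewrite H2 andbT; apply/forallP => i.
by rewrite inE; have := H1 i; case: (c i).
Qed.

Definition wtp (c : {ffun 'I_r -> option T}) : {poly int} :=
  \prod_(i < r) (if c i is Some _ then 'X^(i.+1) else 1 - 'X^(i.+1)).

Definition WS (S : {set 'I_r}) : {poly int} :=
  \prod_(i < r) (if i \in S then 'X^(i.+1) else 1 - 'X^(i.+1)).

Lemma vsum S : \sum_(w : {ffun 'I_r -> bool}) vcoef S w *: 'X^(\sum_(i < r | w i) i.+1) = WS S.
Proof.
rewrite /WS.
have -> : \prod_(i < r) (if i \in S then 'X^(i.+1) else 1 - 'X^(i.+1)) =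
  \prod_(i < r) \sum_(b : bool) ((if i \in S then (if b then 1 else 0) else (if b then -1 else 1)) : int)
     *: (if b then 'X^(i.+1) else 1 : {poly int}).
  apply: eq_bigr => i _; rewrite big_bool /=.
  by case: (i \in S); rewrite ?scale1r ?scale0r ?addr0 ?scaleN1r // addrC.
rewrite bigA_distr_bigA; apply: eq_bigr => w _.
rewrite scaler_prod expr_sum /vcoef; congr (_ *: _).
by rewrite big_mkcond; apply: eq_bigr => i _; case: (w i).
Qed.

Lemma Theta_chains :
  Theta (abIndex le bot top rk r) = \sum_(c | chainb le bot rk top c) wtp c.
Proof.
rewrite /Theta.
under eq_bigr => w _ do rewrite ffunE scaler_suml.
rewrite exchange_big /=.
under eq_bigr => S _ do (under eq_bigr => w _ do rewrite -scalerA; rewrite -scaler_sumr vsum).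
rewrite (partition_big supp xpredT) //=.
apply: eq_bigr => S _.
rewrite /fS scaler_nat -sumr_const.
apply: eq_big => c; first by rewrite chains_eq eq_sym.
rewrite chains_eq => /andP[_ /eqP ->]; rewrite /WS /wtp; apply: eq_bigr => i _.
by rewrite inE; case: (c i).
Qed.

End ThetaSec.

Lemma graded_GH (T : finType) (le : rel T) (bot top : T) (rk : T -> nat) (r : nat) :
  is_graded_poset le bot top rk -> rk top = r.+1 -> GH le bot top rk r.
Proof.
move=> [Hr [Ha [Ht [Hbt [Hrb Hcov]]]]] Hrt.
have ltt : forall x y z, ltb le x y -> ltb le y z -> ltb le x z.
  move=> x y z /andP[nxy lxy] /andP[nyz lyz]; apply/andP; split; last exact: Ht lxy lyz.
  apply/eqP=> exz; subst z.
  by move: nxy; rewrite (Ha _ _ lxy lyz) eqxx.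
have mono : forall x y, ltb le x y -> (rk x < rk y)%N.
  suff H : forall k x y, (#|[set z | ltb le x z && ltb le z y]| <= k)%N ->
      ltb le x y -> (rk x < rk y)%N.
    by move=> x y; apply: H (leqnn _).
  elim=> [|k IH] x y hk hxy.
    rewrite leqn0 cards_eq0 in hk.
    rewrite (Hcov x y hxy) // => z; apply/negP => hz.
    by have := eqP hk; move/setP/(_ z); rewrite !inE hz.
  case: (pickP (fun z => ltb le x z && ltb le z y)) => [z /andP[hxz hzy]|hn]; last first.
    by rewrite (Hcov x y hxy) // => z; rewrite hn.
  have zn : ltb le z z = false by rewrite /ltb eqxx.
  have hxyz : z \in [set w | ltb le x w && ltb le w y] by rewrite inE hxz hzy.
  apply: (@ltn_trans (rk z)).
    apply: IH hxz; rewrite -ltnS; apply: leq_trans hk; apply: proper_card.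
    apply/properP; split.
      apply/subsetP => w; rewrite !inE => /andP[haw hwb].
      by rewrite haw (ltt _ _ _ hwb hzy).
    by exists z; rewrite // inE zn andbF.
  apply: IH hzy; rewrite -ltnS; apply: leq_trans hk; apply: proper_card.
  apply/properP; split.
    apply/subsetP => w; rewrite !inE => /andP[haw hwb].
    by rewrite hwb (ltt _ _ _ hxz haw).
  by exists z; rewrite // inE zn.
by split => // x; case: (Hbt x).
Qed.

Lemma sum_option (A : finType) (K : nmodType) (G : option A -> K) (Pr : pred (option A)) :
  \sum_(v | Pr v) G v = (if Pr None then G None else 0) + \sum_(x | Pr (Some x)) G (Some x).
Proof.
rewrite big_mkcond (bigD1 None) //=; congr (_ + _).
rewrite (reindex_omap Some (fun v => v)); last by case.
rewrite [RHS]big_mkcond; apply: eq_bigl => x; by rewrite eqxx.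
Qed.

Lemma sum_sig (A : finType) (p : pred A) (K : nmodType) (G : A -> K) (Pr : pred A) :
  \sum_(x : {x : A | p x} | Pr (val x)) G (val x) = \sum_(y | p y && Pr y) G y.
Proof.
rewrite [RHS](reindex_omap (val : {x : A | p x} -> A) insub); last first.
  by move=> y /andP[py _]; rewrite insubT.
apply: eq_bigl => -[y py] /=; by rewrite py insubT /= eqxx andbT.
Qed.

Section GHfacts.
Variables (T : finType) (le : rel T) (bot top : T) (rk : T -> nat) (r : nat).
Hypothesis HG : GH le bot top rk r.

Lemma gh_lt_bot x : x != bot -> ltb le bot x.
Proof. by move=> h; rewrite /ltb eq_sym h (gh_bot HG). Qed.

Lemma gh_lt_top x : x != top -> ltb le x top.
Proof. by move=> h; rewrite /ltb h (gh_top HG). Qed.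

Lemma gh_rk_pos x : x != bot -> (0 < rk x)%N.
Proof. by move/gh_lt_bot/(gh_mono HG); rewrite (gh_rb HG). Qed.

Lemma gh_rk_top x : x != top -> (rk x <= r)%N.
Proof. by move/gh_lt_top/(gh_mono HG); rewrite (gh_rt HG). Qed.

Lemma gh_rk_le x y : le x y -> (rk x <= rk y)%N.
Proof.
move=> h; case: (eqVneq x y) => [->//|nxy].
by apply: ltnW; apply: (gh_mono HG); rewrite /ltb nxy h.
Qed.

Lemma gh_botne : bot != top.
Proof.
apply/eqP => e; have := gh_rt HG; by rewrite -e (gh_rb HG).
Qed.

End GHfacts.

Lemma idt (F : fieldType) (p q : F) : 1 - p != 0 -> 1 - q != 0 -> 1 - p * q != 0 ->
  (p*q)/(1 - p*q) * ((1 + p/(1-p))*(1+q/(1-q)) - p/(1-p)*(q/(1-q))) = p/(1-p)*(q/(1-q)).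
Proof. move=> h1 h2 h3. field. by rewrite h1 h2 h3. Qed.


Section Prod.
Variables (P Q : finType) (leP : rel P) (leQ : rel Q) (botP topP : P) (botQ topQ : Q)
  (rkP : P -> nat) (rkQ : Q -> nat) (m n : nat).
Hypothesis HP : GH leP botP topP rkP m.
Hypothesis HQ : GH leQ botQ topQ rkQ n.

Local Notation sP := {x : P | x != topP}.
Local Notation sQ := {x : Q | x != topQ}.
Local Notation leR := (dd_le leP leQ topP topQ).
Local Notation rkR := (dd_rk topP topQ rkP rkQ).
Local Notation botR := (dd_bot botP topP botQ topQ).

Definition bP : sP := exist _ botP (gh_botne HP).
Definition bQ : sQ := exist _ botQ (gh_botne HQ).

Lemma dd_botE : botR = Some (bP, bQ).
Proof.
rewrite /dd_bot (insubT (fun x => x != topP) (gh_botne HP)).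
by rewrite (insubT (fun x => x != topQ) (gh_botne HQ)).
Qed.

Lemma sP_lt_top (a : sP) : ltb leP (val a) topP.
Proof. by apply: (gh_lt_top HP); case: a. Qed.
Lemma sQ_lt_top (a : sQ) : ltb leQ (val a) topQ.
Proof. by apply: (gh_lt_top HQ); case: a. Qed.

Lemma GH_R : GH leR botR (dd_top topP topQ) rkR (m + n).
Proof.
have rP := gh_refl HP; have rQ := gh_refl HQ.
split.
- by case=> [[a b]|] //=; rewrite rP rQ.
- case=> [[a b]|] [[c d]|] //= /andP[h1 h2] /andP[h3 h4].
  have -> : a = c by apply: val_inj; exact: (gh_anti HP) h1 h3.
  by have -> : b = d by apply: val_inj; exact: (gh_anti HQ) h2 h4.
- case=> [[a b]|] [[c d]|] [[e f]|] //= /andP[h1 h2] /andP[h3 h4].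
  by rewrite ((gh_trans HP) _ _ _ h1 h3) ((gh_trans HQ) _ _ _ h2 h4).
- case=> [[a b]|] [[c d]|] //=.
    move=> /andP[nab /andP[h1 h2]].
    have l1 := gh_rk_le HP h1; have l2 := gh_rk_le HQ h2.
    case: (eqVneq a c) => [eac|nac].
      have nbd : b != d by apply: contraNneq nab => ->; rewrite eac.
      have : ltb leQ (val b) (val d) by rewrite /ltb h2 andbT; apply: contra nbd => /eqP /val_inj ->.
      move/(gh_mono HQ) => l3; rewrite eac; by rewrite ltn_add2l.
    have : ltb leP (val a) (val c) by rewrite /ltb h1 andbT; apply: contra nac => /eqP /val_inj ->.
    move/(gh_mono HP) => l3; rewrite -addSn; exact: leq_add l3 l2.
  move=> _; rewrite (gh_rt HP) (gh_rt HQ) /= ltnS.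
  exact: leq_add (gh_rk_top HP (valP a)) (gh_rk_top HQ (valP b)).
- rewrite dd_botE; case=> [[a b]|] //; by rewrite /dd_le /= (gh_bot HP) (gh_bot HQ).
- by case=> [[a b]|].
- by rewrite dd_botE /dd_rk /= (gh_rb HP) (gh_rb HQ).
- by rewrite /dd_rk /dd_top /= (gh_rt HP) (gh_rt HQ).
Qed.

Variables (K : fieldType) (x : K).
Hypothesis Hx : forall k, (0 < k)%N -> 1 - x ^+ k != 0.
Definition tq (k : nat) : K := x ^+ k / (1 - x ^+ k).

Local Notation BP := (Bs leP botP rkP m tq).
Local Notation ZP := (Zf leP botP rkP m tq).
Local Notation BQ := (Bs leQ botQ rkQ n tq).
Local Notation ZQ := (Zf leQ botQ rkQ n tq).
Local Notation BR := (Bs leR botR rkR (m + n) tq).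
Local Notation ZR := (Zf leR botR rkR (m + n) tq).

Lemma tq_id a b : (0 < a)%N -> (0 < b)%N ->
  tq (a + b) * ((1 + tq a) * (1 + tq b) - tq a * tq b) = tq a * tq b.
Proof.
move=> ha hb; rewrite /tq exprD; apply: idt; rewrite ?Hx //.
by rewrite -exprD Hx // addn_gt0 ha.
Qed.

Lemma sumsigP (a : sP) (G : P -> K) :
  \sum_(c : sP | leP (val c) (val a)) G (val c) = \sum_(y | leP y (val a)) G y.
Proof.
rewrite (sum_sig (fun y => y != topP) G (fun y => leP y (val a))); apply: eq_bigl => y; apply: andb_idl => hy.
apply/eqP => eyt; subst y; case: a hy => a /= nat hta.
by move: nat; rewrite ((gh_anti HP) _ _ hta (gh_top HP a)) eqxx.
Qed.

Lemma sumsigQ (b : sQ) (G : Q -> K) :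
  \sum_(c : sQ | leQ (val c) (val b)) G (val c) = \sum_(y | leQ y (val b)) G y.
Proof.
rewrite (sum_sig (fun y => y != topQ) G (fun y => leQ y (val b))); apply: eq_bigl => y; apply: andb_idl => hy.
apply/eqP => eyt; subst y; case: b hy => b /= nbt htb.
by move: nbt; rewrite ((gh_anti HQ) _ _ htb (gh_top HQ b)) eqxx.
Qed.

Lemma ZR_key (a : sP) (b : sQ) :
  (forall c d, ltb leR (Some (c, d)) (Some (a, b)) -> ZR (Some (c, d)) = ZP (val c) * ZQ (val d)) ->
  Some (a, b) != botR ->
  ZR (Some (a, b)) = tq (rkP (val a) + rkQ (val b)) *
        ((\sum_(y | leP y (val a)) ZP y) * (\sum_(y | leQ y (val b)) ZQ y)
         - ZP (val a) * ZQ (val b)).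
Proof.
move=> IH hne.
rewrite {1}/Zf (negbTE hne) (Bs_sumZ GH_R) //; congr (_ * _).
rewrite sum_option /= add0r.
rewrite -(sumsigP a) -(sumsigQ b) big_distrlr pair_big_dep /=.
rewrite [X in _ = X - _](bigD1 (a, b)) /=; last by rewrite (gh_refl HP) (gh_refl HQ).
rewrite addrC addrK; apply: eq_big => -[c d] /=.
  rewrite /ltb /dd_le /= andbC; congr (_ && _).
by move=> hlt; apply: IH.
Qed.

Lemma ZR_prod (a : sP) (b : sQ) : ZR (Some (a, b)) = ZP (val a) * ZQ (val b).
Proof.
have HR := GH_R.
suff H : forall N (a : sP) (b : sQ), (rkP (val a) + rkQ (val b) < N)%N ->
    ZR (Some (a, b)) = ZP (val a) * ZQ (val b).
  exact: H _ a b (ltnSn _).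
clear a b; elim=> [//|N IH] -[a pa] -[b pb] /= hN.
have eqbot : (Some (exist _ a pa, exist _ b pb) == botR) = (a == botP) && (b == botQ).
  rewrite dd_botE; apply/eqP/andP => [[-> ->]|[/eqP ha /eqP hb]] //.
  by congr (Some (_, _)); apply: val_inj.
case: (eqVneq a botP) => ha; case: (eqVneq b botQ) => hb.
- rewrite /Zf eqbot; move/eqP: ha => ->; move/eqP: hb => ->; by rewrite mulr1.
all: have hne : Some (exist _ a pa, exist _ b pb) != botR by move: ha hb; rewrite eqbot; do 2 case: eqP => //.
all: have := @ZR_key (exist _ a pa) (exist _ b pb); rewrite /= => key.
all: rewrite key //; last first.
all: try (move=> c d hlt; apply: IH;
      move: hlt => /(gh_mono GH_R); rewrite /dd_rk /= => h; rewrite ltnS in hN; exact: leq_trans h hN).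
- subst a; rewrite (SZ_b HP) (SZ_nb HQ) // /Zf (negbTE hb) !eqxx (gh_rb HP) add0n.
  set t1 := tq _; set B := Bs _ _ _ _ _ _; ring.
- subst b; rewrite (SZ_b HQ) (SZ_nb HP) // /Zf (negbTE ha) !eqxx (gh_rb HQ) addn0.
  set t1 := tq _; set B := Bs _ _ _ _ _ _; ring.
- rewrite (SZ_nb HP) // (SZ_nb HQ) // /Zf (negbTE ha) (negbTE hb).
  transitivity (tq (rkP a + rkQ b) * ((1 + tq (rkP a)) * (1 + tq (rkQ b))
      - tq (rkP a) * tq (rkQ b)) * (BP a * BQ b)); first ring.
  rewrite tq_id; first ring.
  all: first [exact: (gh_rk_pos HP ha) | exact: (gh_rk_pos HQ hb)].
Qed.

Lemma BR_top : BR (dd_top topP topQ) = BP topP * BQ topQ.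
Proof.
have HR := GH_R.
rewrite (Bs_sumZ HR); last by rewrite dd_botE.
rewrite (Bs_sumZ HP); last by rewrite eq_sym (gh_botne HP).
rewrite (Bs_sumZ HQ); last by rewrite eq_sym (gh_botne HQ).
rewrite sum_option /= add0r.
rewrite (eq_bigr (fun p : sP * sQ => ZP (val p.1) * ZQ (val p.2))); last first.
  by case=> c d _; exact: ZR_prod.
rewrite (eq_bigl xpredT); last by case.
rewrite (eq_bigl (fun y => (y != topP) && true)); last first.
  by move=> y; rewrite /ltb (gh_top HP) andbT.
rewrite [X in _ = _ * X](eq_bigl (fun y => (y != topQ) && true)); last first.
  by move=> y; rewrite /ltb (gh_top HQ) andbT.
rewrite -(sum_sig (fun y => y != topP) _ xpredT) -(sum_sig (fun y => y != topQ) _ xpredT).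
by rewrite big_distrlr pair_big.
Qed.


End Prod.

Definition Dp (k : nat) : {poly int} := \prod_(i < k) (1 - 'X^(i.+1)).

Lemma qint_mul k : qint k * (1 - 'X) = 1 - 'X^k.
Proof.
elim: k => [|k IH]; first by rewrite /qint big_ord0 mul0r expr0 subrr.
rewrite /qint big_ord_recr /= mulrDl -/(qint k) IH exprSr.
ring.
Qed.

Lemma qfact_D k : qfact k * (1 - 'X) ^+ k = Dp k.
Proof.
elim: k => [|k IH]; first by rewrite /qfact /Dp !big_ord0 mulr1.
rewrite /qfact /Dp !big_ord_recr /= -/(qfact k) -/(Dp k) -IH exprSr.
rewrite -qint_mul; ring.
Qed.

Lemma qint_split m n : qint m.+1 + 'X^(m.+1) * qint n.+1 = qint (m + n).+2.
Proof.
have h : (1 - 'X : {poly int}) != 0.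
  apply/eqP => /(congr1 (fun p => p.[2])); rewrite !hornerE.
  by move/eqP; rewrite subr_eq0.
apply: (mulIf h); rewrite mulrDl -mulrA !qint_mul.
have -> : (m + n).+2 = (m.+1 + n.+1)%N by rewrite addnS addSn.
rewrite exprD; ring.
Qed.

Lemma qbin_ex m n : exists p, p * (qfact m * qfact n) = qfact (m + n).
Proof.
elim: m n => [|m IHm] n.
  by exists 1; rewrite /qfact big_ord0 !mul1r.
elim: n => [|n IHn].
  by exists 1; rewrite /qfact big_ord0 !mul1r mulr1 addn0.
have [p1 h1] := IHm n.+1; have [p2 h2] := IHn.
exists (p1 + 'X^(m.+1) * p2).
have e1 : qfact m.+1 = qfact m * qint m.+1 by rewrite /qfact big_ord_recr.
have e2 : qfact n.+1 = qfact n * qint n.+1 by rewrite /qfact big_ord_recr.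
have e3 : qfact (m.+1 + n.+1) = qfact (m + n.+1) * qint (m + n).+2.
  by rewrite /qfact addSn big_ord_recr /= addnS.
have e4 : qfact (m + n.+1) = qfact (m.+1 + n) by rewrite addnS addSn.
rewrite e3 -qint_split mulrDr {2}e4 -h2 -h1 e1 e2; ring.
Qed.

Lemma size_qint k : (size (qint k) <= k)%N.
Proof.
elim: k => [|k IH]; first by rewrite /qint big_ord0 size_poly0.
rewrite /qint big_ord_recr /= -/(qint k).
apply: leq_trans (size_polyD _ _) _; rewrite size_polyXn geq_max leqnn andbT.
exact: leq_trans IH _.
Qed.

Lemma qint_monic k : qint k.+1 \is monic.
Proof.
apply/monicP; rewrite /qint big_ord_recr /= -/(qint k) lead_coefDr ?lead_coefXn //.
by rewrite size_polyXn ltnS size_qint.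
Qed.

Lemma qfact_monic k : qfact k \is monic.
Proof. by apply: monic_prod => i _; exact: qint_monic. Qed.

Lemma qbinom_D m n : qbinom m n * Dp m * Dp n = Dp (m + n).
Proof.
have [p hp] := qbin_ex m n.
have -> : qbinom m n = p.
  rewrite /qbinom -hp Pdiv.IdomainMonic.mulpK //.
  by rewrite monicMl qfact_monic.
by rewrite -!qfact_D -hp exprD; ring.
Qed.

Local Notation FF := {fraction {poly int}}.
Definition xF : FF := tofrac 'X.

Lemma xF_ne k : (0 < k)%N -> 1 - xF ^+ k != 0.
Proof.
move=> hk; have -> : 1 - xF ^+ k = tofrac (1 - 'X^k : {poly int}).
  by rewrite rmorphB rmorph1 rmorphXn.
rewrite tofrac_eq0.
apply/eqP => /(congr1 (fun p => p.[0])); rewrite !hornerE expr0n.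
by case: k hk.
Qed.

Lemma tofrac_some k : (0 < k)%N ->
  (tofrac ('X^k : {poly int}) : FF) = tofrac (1 - 'X^k) * tq xF k.
Proof.
move=> hk; rewrite tofracB tofrac1 tofracXn /tq -/xF mulrC divfK //; exact: xF_ne.
Qed.

Lemma tofrac_none k : (tofrac (1 - 'X^k : {poly int}) : FF) = tofrac (1 - 'X^k) * 1.
Proof. by rewrite mulr1. Qed.

Lemma Theta_frac (T : finType) (le : rel T) (bot top : T) (rk : T -> nat) (r : nat) :
  tofrac (Theta (abIndex le bot top rk r)) =
  (tofrac (Dp r) : FF) * Bs le bot rk r (tq xF) top.
Proof.
rewrite Theta_chains rmorph_sum /Bs big_distrr /=; apply: eq_bigr => c _.
rewrite /wtp /wt /Dp !rmorph_prod -big_split /=; apply: eq_bigr => i _.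
case: (c i) => [_|]; [exact: tofrac_some | exact: tofrac_none].
Qed.

Lemma rearr (R : comNzRingType) (a b c d e : R) : (a * b * c) * (d * e) = a * (b * d) * (c * e).
Proof. ring. Qed.

Unset Implicit Arguments.

Theorem mainTheorem8 (P : finType) (leP : rel P) (botP topP : P) (rkP : P -> nat)
  (Q : finType) (leQ : rel Q) (botQ topQ : Q) (rkQ : Q -> nat) (m n : nat) :
  is_graded_poset leP botP topP rkP -> rkP topP = m.+1 ->
  is_graded_poset leQ botQ topQ rkQ -> rkQ topQ = n.+1 ->
  Theta (abIndex (dd_le leP leQ topP topQ) (dd_bot botP topP botQ topQ)
           (dd_top topP topQ) (dd_rk topP topQ rkP rkQ) (m + n))
  = qbinom m n * Theta (abIndex leP botP topP rkP m)
               * Theta (abIndex leQ botQ topQ rkQ n).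
Proof.
move=> hP hm hQ hn.
have HP := graded_GH hP hm; have HQ := graded_GH hQ hn.
apply/eqP; rewrite -(tofrac_eq (R := {poly int})); apply/eqP.
rewrite !tofracM !Theta_frac (BR_top HP HQ xF_ne) -qbinom_D !tofracM.
exact: rearr.
Qed.
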